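(* Let $n\ge w\ge t\ge 1$ and $q,q'\ge 1$ be integers. Let $S\subset Q_{q*}^n$ be an $H(n,q,w,t)$ design and let $R\subset Q_{q'*}^w$ be an $H(w,q',w,t)$ design (i.e. an MDS code of length $w$ over $Q_{q'}$ in which every word of weight $t$ in $Q_{q'*}^w$ is extended by exactly one codeword). For each pair consisting of a codeword $a\in S$, whose non-$*$ entries in increasing order of position are $a^1,\dots,a^w$, and a codeword $(b_1,\dots,b_w)\in R$, form the word in $(Q_q\times Q_{q'})_*^n$ which has $*$ exactly where $a$ has $*$, and whose $j$-th non-$*$ entry (in increasing order of position) is the pair $(a^j,b_j)$, $j=1,\dots,w$. Identifying $Q_q\times Q_{q'}$ with $Q_{qq'}$, let $T\subset Q_{qq'*}^n$ be the set of all such words. Then $T$ is an $H(n,qq',w,t)$ design.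
   Context: For an integer $q\ge1$, $Q_q=\{0,1,\dots,q-1\}$ and $Q_{q*}=Q_q\cup\{*\}$ (for any finite alphabet $A$, $A_*=A\cup\{*\}$). The weight of a word $u\in Q_{q*}^n$ is $n$ minus the number of $*$ symbols in $u$. For $u,v\in Q_{q*}^n$ we say $u$ extends $v$ if $u_i=v_i$ for every position $i$ with $v_i\neq *$ (equivalently, viewing $u$ as the face $F(u)=\{x\in Q_q^n: x_i=u_i \text{ whenever } u_i\ne *\}$ of the hypercube $Q_q^n$, $F(u)\subseteq F(v)$). An $H(n,q,w,t)$ design is a set $S$ of words of weight $w$ in $Q_{q*}^n$ such that every word of weight $t$ in $Q_{q*}^n$ is extended by exactly one element of $S$. *)

(* Defs.v *)
From mathcomp Require Import all_boot.
Set Implicit Arguments. Unset Strict Implicit. Unset Printing Implicit Defensive.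

(* A word of length n over Q_{q*}: None plays the role of '*'. *)
Definition word (n q : nat) := {ffun 'I_n -> option 'I_q}.

Definition weight n q (u : word n q) : nat := #|[set i | u i != None]|.

Definition extends n q (u v : word n q) : Prop :=
  forall i, v i != None -> u i = v i.

Definition is_design n q w t (S : {set word n q}) : Prop :=
  (forall s, s \in S -> weight s = w) /\
  (forall v : word n q, weight v = t ->
     exists! s, s \in S /\ extends s v).

(* identification of Q_q x Q_q' with Q_{qq'} : (x,y) |-> x*q' + y *)
Lemma pair_code_subproof q q' (x : 'I_q) (y : 'I_q') : x * q' + y < q * q'.
Proof.
case: x => x /= Hx; case: y => y /= Hy.
apply: (@leq_trans (x * q' + q')); first by rewrite ltn_add2l.
by rewrite -mulSnr leq_mul2r Hx orbT.
Qed.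

Definition pair_code q q' (x : 'I_q) (y : 'I_q') : 'I_(q * q') :=
  Ordinal (pair_code_subproof x y).

Definition supp_rank n q (a : word n q) (i : 'I_n) : nat :=
  #|[set k : 'I_n | (a k != None) && (k < i)]|.

(* the j-th (0-based) entry of b, or * if out of range *)
Definition entry w q' (b : word w q') (r : nat) : option 'I_q' :=
  match @insub nat (fun r => r < w) 'I_w r with
  | Some j => b j
  | None => None
  end.

Definition combine n q w q' (a : word n q) (b : word w q') : word n (q * q') :=
  [ffun i => match a i, entry b (supp_rank a i) with
             | Some x, Some y => Some (pair_code x y)
             | _, _ => None
             end].

Definition product_design n q w q' (S : {set word n q}) (R : {set word w q'})
  : {set word n (q * q')} :=
  [set combine a b | a in S, b in R].

(* Main.v *)
Require Import Defs.
From mathcomp Require Import all_boot.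
Set Implicit Arguments. Unset Strict Implicit. Unset Printing Implicit Defensive.

Section Aux.
Variables (q q' : nat) (Hq : 0 < q) (Hq' : 0 < q').

Definition fstc (z : 'I_(q*q')) : 'I_q := insubd (Ordinal Hq) (z %/ q').
Definition sndc (z : 'I_(q*q')) : 'I_q' := insubd (Ordinal Hq') (z %% q').

Lemma fstc_pair x y : fstc (pair_code x y) = x.
Proof.
apply: val_inj; rewrite /fstc val_insubd /=.
have E : (x * q' + y) %/ q' = x by rewrite divnMDl // divn_small ?ltn_ord // addn0.
by rewrite E ltn_ord.
Qed.

Lemma sndc_pair x y : sndc (pair_code x y) = y.
Proof.
apply: val_inj; rewrite /sndc val_insubd /= modnMDl modn_small ?ltn_ord //.
Qed.

Lemma pair_fst_snd z : pair_code (fstc z) (sndc z) = z.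
Proof.
apply: val_inj; rewrite /= !val_insubd ltn_divLR // ltn_pmod // ltn_ord.
by rewrite -divn_eq.
Qed.
End Aux.

Lemma rank_lt n q (a : word n q) (i : 'I_n) : a i != None -> supp_rank a i < weight a.
Proof.
move=> Hi; rewrite /supp_rank /weight; apply: proper_card; apply/properP; split.
- by apply/subsetP => k; rewrite !inE => /andP[].
- by exists i; rewrite !inE ?Hi ?ltnn.
Qed.

Lemma rank_mono n q (a : word n q) (i k : 'I_n) :
  a i != None -> i < k -> supp_rank a i < supp_rank a k.
Proof.
move=> Hi Hik; rewrite /supp_rank; apply: proper_card; apply/properP; split.
- apply/subsetP => k'; rewrite !inE => /andP[-> H]; exact: ltn_trans H Hik.
- by exists i; rewrite !inE ?Hi ?ltnn ?andbF.
Qed.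

Lemma rank_inj n q (a : word n q) (i k : 'I_n) :
  a i != None -> a k != None -> supp_rank a i = supp_rank a k -> i = k.
Proof.
move=> Hi Hk E; case: (ltngtP i k) => [lt|lt|/val_inj //].
- by have := rank_mono Hi lt; rewrite E ltnn.
- by have := rank_mono Hk lt; rewrite E ltnn.
Qed.

Lemma full w q' (b : word w q') : weight b = w -> forall j, b j != None.
Proof.
move=> Hb j.
have E : [set i | b i != None] = setT.
  apply/eqP; rewrite eqEcard subsetT cardsT card_ord; by move: Hb; rewrite /weight => ->; rewrite leqnn.
have : j \in [set i | b i != None] by rewrite E inE.
by rewrite inE.
Qed.

Definition rk n q w (Hw : 0 < w) (a : word n q) (i : 'I_n) : 'I_w :=
  insubd (Ordinal Hw) (supp_rank a i).

Lemma val_rk n q w (Hw : 0 < w) (a : word n q) i :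
  weight a = w -> a i != None -> val (rk Hw a i) = supp_rank a i.
Proof.
move=> Ha Hi; rewrite val_insubd; have := rank_lt Hi; rewrite Ha => -> //.
Qed.

Lemma rk_inj n q w (Hw : 0 < w) (a : word n q) i k :
  weight a = w -> a i != None -> a k != None -> rk Hw a i = rk Hw a k -> i = k.
Proof.
move=> Ha Hi Hk /(congr1 val); rewrite !val_rk //; exact: rank_inj.
Qed.

Lemma combineE n q w q' (Hw : 0 < w) (a : word n q) (b : word w q') i :
  weight a = w ->
  combine a b i = match a i with
                  | Some x => match b (rk Hw a i) with
                              | Some y => Some (pair_code x y) | None => None end
                  | None => None end.
Proof.
move=> Ha; rewrite ffunE; case E: (a i) => [x|] //.
have Hi : a i != None by rewrite E.
rewrite /entry; case: insubP => [j Hj Hjv | Hn].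
- have -> : j = rk Hw a i by apply: val_inj; rewrite Hjv val_rk.
  by [].
- by move: Hn; have := rank_lt Hi; rewrite Ha => ->.
Qed.

Theorem proposition1 (n w t q q' : nat)
  (S : {set word n q}) (R : {set word w q'}) :
  1 <= t -> t <= w -> w <= n -> 1 <= q -> 1 <= q' ->
  is_design w t S -> is_design w t R ->
  is_design w t (product_design S R).
Proof.
move=> Ht Htw Hwn Hq Hq' [SW SU] [RW RU].
have Hw : 0 < w := leq_trans Ht Htw.
have suppC : forall a b, a \in S -> b \in R ->
    forall i, (combine a b i != None) = (a i != None).
  move=> a b aS bR i; rewrite (combineE Hw) ?SW //.
  case: (a i) => [x|] //. have := full (RW b bR) (rk Hw a i). by case: (b _).
split.
  move=> s /imset2P [a b aS bR ->]; rewrite /weight.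
  have -> : [set i | combine a b i != None] = [set i | a i != None].
    by apply/setP => i; rewrite !inE suppC.
  exact: SW.
move=> v Hv.
set v1 : word n q := [ffun i : 'I_n => omap (fstc Hq) (v i)].
have Hv1 : weight v1 = t.
  rewrite -Hv /weight; apply: eq_card => i; rewrite !inE ffunE; by case: (v i).
case: (SU v1 Hv1) => a [[aS aext] auniq].
have Hva : forall i z, v i = Some z -> a i = Some (fstc Hq z).
  move=> i z E; rewrite (aext i); first by rewrite ffunE E.
  by rewrite ffunE E.
have vaN : forall i, v i != None -> a i != None.
  move=> i; case E: (v i) => [z|] // _; by rewrite (Hva _ _ E).
have aw := SW a aS.
set v2 : word w q' := [ffun j : 'I_w => if [pick i : 'I_n | (v i != None) && (rk Hw a i == j)]
                                 is Some i then omap (sndc Hq') (v i) else None].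
have Hv2 : forall i, v i != None -> v2 (rk Hw a i) = omap (sndc Hq') (v i).
  move=> i Hi; rewrite ffunE; case: pickP => [k /andP [Hk /eqP Ek]| /(_ i)];
    last by rewrite Hi eqxx.
  by rewrite (rk_inj aw (vaN _ Hk) (vaN _ Hi) Ek).
have Hv2N : forall j, v2 j != None -> exists2 i, v i != None & j = rk Hw a i.
  move=> j; rewrite ffunE; case: pickP => [k /andP[Hk /eqP Ek] _ | _] //.
  by exists k.
have Hv2w : weight v2 = t.
  rewrite /weight.
  have -> : [set j | v2 j != None] = rk Hw a @: [set i | v i != None].
    apply/setP => j; rewrite inE; apply/idP/imsetP.
    - move/Hv2N => [i Hi ->]; exists i => //; by rewrite inE.
    - move=> [i]; rewrite inE => Hi ->; rewrite Hv2 //; by case: (v i) Hi.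
  rewrite card_in_imset; first exact Hv.
  move=> i k; rewrite !inE => Hi Hk; exact: rk_inj aw (vaN _ Hi) (vaN _ Hk).
case: (RU v2 Hv2w) => b [[bR bext] buniq].
exists (combine a b); split; [split|].
- by apply: imset2_f.
- move=> i; case E: (v i) => [z|] // _.
  rewrite (combineE Hw _ _ aw) (Hva _ _ E).
  rewrite bext; last by rewrite Hv2 ?E.
  by rewrite Hv2 ?E //= pair_fst_snd.
- move=> s' [/imset2P [a' b' a'S b'R ->] Hext].
  have a'w := SW a' a'S.
  have Hc : forall i z, v i = Some z -> exists x y,
      [/\ a' i = Some x, b' (rk Hw a' i) = Some y & pair_code x y = z].
    move=> i z E; move: (Hext i); rewrite E => /(_ isT).
    rewrite (combineE Hw _ _ a'w).
    case: (a' i) => [x|] //; case: (b' _) => [y|] // [<-]; by exists x, y.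
  have Ea : a = a'.
    apply: auniq; split => // i; rewrite ffunE; case E: (v i) => [z|] //= _.
    have [x [y [-> _ <-]]] := Hc i z E. by rewrite fstc_pair.
  subst a'.
  have Eb : b = b'.
    apply: buniq; split => // j /[dup] Hj /Hv2N [i Hi ->].
    rewrite Hv2 //. case E: (v i) Hi => [z|] // _.
    have [x [y [_ -> <-]]] := Hc i z E. by rewrite /= sndc_pair.
  by rewrite Eb.
Qed.
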